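(* Let $n>2$ and $q>0$ be integers such that $n$ is even or $q$ is odd. Then for every prime $p>\max\{n,(q-1)n+1\}$, $$ p^n\sum_{k=0}^{p-1}\frac{(1)_k^n}{(\frac{p}{n}-q+2)_k^n}\equiv0\pmod{p^3}. $$
   Context: $(x)_k$ denotes the Pochhammer symbol: $(x)_0=1$ and $(x)_k=x(x+1)\cdots(x+k-1)$ for $k>0$. A congruence between rational numbers modulo $p^m$ means their difference lies in $p^m\mathbb{Z}_{(p)}$, where $\mathbb{Z}_{(p)}$ is the ring of rationals whose denominators are coprime to $p$. *)

(* Defs.v *)
From mathcomp Require Import all_boot all_order all_algebra.
Set Implicit Arguments. Unset Strict Implicit. Unset Printing Implicit Defensive.
Import Order.TTheory GRing.Theory Num.Theory.
Local Open Scope ring_scope.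

Definition poch (x : rat) (k : nat) : rat := \prod_(i < k) (x + i%:R).

(* x = y (mod p^m) for rationals: x - y lies in p^m Z_(p), i.e.
   x - y = p^m * a / b with a an integer and b a positive integer coprime to p. *)
Definition rat_cong_mod (p m : nat) (x y : rat) : Prop :=
  exists (a : int) (b : nat),
    (0 < b)%N /\ coprime b p /\ x - y = (p ^ m)%N%:R * a%:~R / b%:R.

(* Main.v *)
Require Import Defs.
From mathcomp Require Import all_boot all_order all_algebra.
From mathcomp Require Import ring zify.
Set Implicit Arguments. Unset Strict Implicit. Unset Printing Implicit Defensive.
Import Order.TTheory GRing.Theory Num.Theory.
Local Open Scope ring_scope.

Section Padic.
Variable p : nat.
Hypothesis pP : prime p.

Definition pint (x : rat) := exists (a : int) (b : nat),
  (0 < b)%N /\ coprime b p /\ x = a%:~R / b%:R.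

Lemma pnat_neq0 (b : nat) : (0 < b)%N -> (b%:R : rat) != 0.
Proof. by rewrite pnatr_eq0 -lt0n. Qed.

Lemma n1_neq0 (k : nat) : (1 + k%:R : rat) != 0.
Proof. by rewrite addrC natr1 pnatr_eq0. Qed.

Lemma pint_int (a : int) : pint a%:~R.
Proof. by exists a, 1%N; rewrite coprime1n divr1. Qed.

Lemma pint_nat (n : nat) : pint n%:R.
Proof. by have := pint_int n; rewrite pmulrn. Qed.

Lemma pint0 : pint 0. Proof. exact: (pint_nat 0). Qed.
Lemma pint1 : pint 1. Proof. exact: (pint_nat 1). Qed.

Lemma pintD x y : pint x -> pint y -> pint (x + y).
Proof.
move=> [a [b [b0 [cb ->]]]] [c [d [d0 [cd ->]]]].
exists (a * d%:Z + c * b%:Z), (b * d)%N; split; first by rewrite muln_gt0 b0.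
split; first by rewrite coprimeMl cb cd.
have hb := pnat_neq0 b0; have hd := pnat_neq0 d0.
rewrite natrM rmorphD !rmorphM /=. rewrite -!pmulrn. field. by rewrite hb hd.
Qed.

Lemma pintN x : pint x -> pint (- x).
Proof.
move=> [a [b [b0 [cb ->]]]]; exists (- a), b; do 2!split => //.
by rewrite rmorphN mulNr.
Qed.

Lemma pintB x y : pint x -> pint y -> pint (x - y).
Proof. by move=> hx hy; apply: pintD => //; apply: pintN. Qed.

Lemma pintM x y : pint x -> pint y -> pint (x * y).
Proof.
move=> [a [b [b0 [cb ->]]]] [c [d [d0 [cd ->]]]].
exists (a * c), (b * d)%N; split; first by rewrite muln_gt0 b0.
split; first by rewrite coprimeMl cb cd.
have hb := pnat_neq0 b0; have hd := pnat_neq0 d0.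
rewrite natrM !rmorphM /=. field. by rewrite hb hd.
Qed.

Lemma pintX x n : pint x -> pint (x ^+ n).
Proof. by move=> hx; elim: n => [|n IH]; [rewrite expr0; exact: pint1 | rewrite exprS; exact: pintM]. Qed.

Lemma pint_sum (I : Type) (r : seq I) (P : pred I) (F : I -> rat) :
  (forall i, P i -> pint (F i)) -> pint (\sum_(i <- r | P i) F i).
Proof. by move=> h; apply: big_ind => //; [exact: pint0 | exact: pintD]. Qed.

Lemma pint_prod (I : Type) (r : seq I) (P : pred I) (F : I -> rat) :
  (forall i, P i -> pint (F i)) -> pint (\prod_(i <- r | P i) F i).
Proof. by move=> h; apply: big_ind => //; [exact: pint1 | exact: pintM]. Qed.

Lemma pint_invn (b : nat) : (0 < b)%N -> coprime b p -> pint (b%:R^-1).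
Proof. by move=> b0 cb; exists 1, b; rewrite mul1r. Qed.

Lemma pint_divn (a b : nat) : (0 < b)%N -> coprime b p -> pint (a%:R / b%:R).
Proof. by move=> b0 cb; apply: pintM; [exact: pint_nat | exact: pint_invn]. Qed.

Definition pdv (k : nat) (x : rat) := exists y, pint y /\ x = (p%:R ^+ k) * y.

Lemma pdvP k y : pint y -> pdv k ((p%:R ^+ k) * y).
Proof. by move=> h; exists y. Qed.

Lemma pdv0 k : pdv k 0.
Proof. by exists 0; rewrite mulr0; split => //; exact: pint0. Qed.

Lemma pdvD k x y : pdv k x -> pdv k y -> pdv k (x + y).
Proof. by move=> [a [ha ->]] [b [hb ->]]; exists (a + b); rewrite mulrDr; split => //; apply: pintD. Qed.

Lemma pdvN k x : pdv k x -> pdv k (- x).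
Proof. by move=> [a [ha ->]]; exists (- a); rewrite mulrN; split => //; apply: pintN. Qed.

Lemma pdvB k x y : pdv k x -> pdv k y -> pdv k (x - y).
Proof. by move=> hx hy; apply: pdvD => //; apply: pdvN. Qed.

Lemma pdvMr k x y : pdv k x -> pint y -> pdv k (x * y).
Proof. by move=> [a [ha ->]] hy; exists (a * y); rewrite mulrA; split => //; apply: pintM. Qed.

Lemma pdvMl k x y : pint x -> pdv k y -> pdv k (x * y).
Proof. by move=> hx hy; rewrite mulrC; apply: pdvMr. Qed.

Lemma pdvMM k l x y : pdv k x -> pdv l y -> pdv (k + l) (x * y).
Proof.
move=> [a [ha ->]] [b [hb ->]]; exists (a * b); rewrite exprD; split; first exact: pintM.
by rewrite mulrACA.
Qed.

Lemma pdv_pint x : pint x -> pdv 0 x.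
Proof. by move=> h; exists x; rewrite expr0 mul1r. Qed.

Lemma pint_pdv x : pdv 0 x -> pint x.
Proof. by move=> [y [hy ->]]; rewrite expr0 mul1r. Qed.

Lemma pdv_le k l x : (k <= l)%N -> pdv l x -> pdv k x.
Proof.
move=> kl [y [hy ->]]; exists (p%:R ^+ (l - k) * y); split.
  by apply: pintM => //; apply: pintX; apply: pint_nat.
by rewrite mulrA -exprD subnKC.
Qed.

Lemma pdv_sum k (I : Type) (r : seq I) (P : pred I) (F : I -> rat) :
  (forall i, P i -> pdv k (F i)) -> pdv k (\sum_(i <- r | P i) F i).
Proof. by move=> h; apply: big_ind => //; [exact: pdv0 | exact: pdvD]. Qed.

Lemma pdv_p : pdv 1 p%:R.
Proof. by exists 1; rewrite expr1 mulr1; split => //; exact: pint1. Qed.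

Lemma pdv_pX k : pdv k (p%:R ^+ k).
Proof. by exists 1; rewrite mulr1; split => //; exact: pint1. Qed.


Lemma coprime_small b : (0 < b)%N -> (b < p)%N -> coprime b p.
Proof.
move=> b0 bp; rewrite coprime_sym prime_coprime //.
by apply/negP => /(dvdn_leq b0); rewrite leqNgt bp.
Qed.

Definition ev (N : nat) (c : nat -> rat) (x : rat) := \sum_(i < N) c i * x ^+ i.
Definition good (N : nat) (c : nat -> rat) :=
  (forall i, pint (c i)) /\ (forall i, (N <= i)%N -> c i = 0).

Lemma ev_widen N M c x : (forall i, (N <= i)%N -> c i = 0) -> (N <= M)%N ->
  ev M c x = ev N c x.
Proof.
move=> hc NM; rewrite /ev -(subnKC NM) big_split_ord /=.
rewrite [X in _ + X]big1 ?addr0 // => i _; rewrite hc ?mul0r //.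
by rewrite leq_addr.
Qed.

Lemma ev_shift N c x : ev N.+1 c x = c 0%N + x * ev N (fun i => c i.+1) x.
Proof.
rewrite /ev big_ord_recl expr0 mulr1 mulr_sumr; congr (_ + _).
by apply: eq_bigr => i _; rewrite exprS mulrCA.
Qed.

Lemma pint_ev N c x : (forall i, pint (c i)) -> pint x -> pint (ev N c x).
Proof. by move=> hc hx; apply: pint_sum => i _; apply: pintM => //; apply: pintX. Qed.

Lemma binom_diff k (x : rat) :
  (x + 1) ^+ k.+1 - x ^+ k.+1 = \sum_(i < k.+1) ('C(k.+1, i))%:R * x ^+ i.
Proof.
rewrite exprD1n big_ord_recr /= binn mulr1n addrK.
by apply: eq_bigr => i _; rewrite mulr_natl.
Qed.

Lemma antidiff N : (N < p)%N -> forall c, good N c ->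
  exists C, C 0%N = 0 /\ good N.+1 C /\
    forall x, ev N.+1 C (x + 1) - ev N.+1 C x = ev N c x.
Proof.
elim: N => [_ c _|N IH Np c [hc sc]].
  exists (fun _ => 0); split => //; split; first by split => // i; exact: pint0.
  by move=> x; rewrite /ev !big_ord1 big_ord0 !mul0r subrr.
set a := c N.
have hN : pint (N.+1%:R^-1) by apply: pint_invn => //; apply: coprime_small.
pose c' := fun i => if (i < N)%N then c i - a / N.+1%:R * ('C(N.+1, i))%:R else 0.
have gc' : good N c'.
  split=> [i|i]; rewrite /c'; last by rewrite leqNgt => /negbTE ->.
  case: ifP => _; last exact: pint0.
  apply: pintB => //; apply: pintM; [apply: pintM; [exact: hc|exact: hN]|apply: pint_nat].
have [C' [C0 [[hC' sC'] eC']]] := IH (ltnW Np) c' gc'.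
exists (fun i => if i == N.+1 then a / N.+1%:R else C' i); split => //.
split.
  split=> i; first by case: ifP => _ //; apply: pintM => //; exact: hc.
  move=> hi; case: eqP => [e|_]; first by move: hi; rewrite e ltnn.
  by apply: sC'; apply: ltnW.
have evC : forall y, ev N.+2 (fun i => if i == N.+1 then a / N.+1%:R else C' i) y
    = ev N.+1 C' y + a / N.+1%:R * y ^+ N.+1.
  move=> y; rewrite /ev big_ord_recr /= eqxx; congr (_ + _).
  by apply: eq_bigr => i _; rewrite (ltn_eqF (ltn_ord i)).
move=> x; rewrite !evC.
have -> : ev N.+1 C' (x + 1) + a / N.+1%:R * (x + 1) ^+ N.+1 -
   (ev N.+1 C' x + a / N.+1%:R * x ^+ N.+1) =
   (ev N.+1 C' (x + 1) - ev N.+1 C' x) + a / N.+1%:R * ((x + 1) ^+ N.+1 - x ^+ N.+1).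
  by ring.
rewrite eC' binom_diff big_ord_recr /= binSn.
have -> : ev N c' x = ev N c x - a / N.+1%:R * \sum_(i < N) ('C(N.+1, i))%:R * x ^+ i.
  rewrite /ev mulr_sumr -sumrB; apply: eq_bigr => i _.
  by rewrite /c' ltn_ord mulrBl mulrA.
rewrite [in RHS]/ev big_ord_recr /= -/(ev N c x) -/a.
have hn : (N.+1%:R : rat) != 0 by rewrite pnatr_eq0.
rewrite mulrDr addrA subrK; congr (_ + _).
by field; rewrite addrC natr1.
Qed.


Lemma pp0 : (p%:R : rat) != 0.
Proof. by rewrite pnatr_eq0 -lt0n prime_gt0. Qed.

Lemma coprime_addp a : coprime (a + p) p = coprime a p.
Proof. by rewrite coprime_sym /coprime gcdnDr -/(coprime p a) coprime_sym. Qed.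

Lemma expand2 (u : rat) k : pint u ->
  pdv 3 ((1 + p%:R * u) ^+ k - 1 - k%:R * (p%:R * u) - ('C(k, 2))%:R * (p%:R * u) ^+ 2).
Proof.
move=> hu; elim: k => [|k IH].
  by rewrite expr0 bin0n !mul0r !subr0 subrr; exact: pdv0.
set y := p%:R * u.
have -> : (1 + y) ^+ k.+1 - 1 - k.+1%:R * y - ('C(k.+1, 2))%:R * y ^+ 2 =
   (1 + y) * ((1 + y) ^+ k - 1 - k%:R * y - ('C(k, 2))%:R * y ^+ 2)
   + ('C(k, 2))%:R * (p%:R ^+ 3 * u ^+ 3).
  rewrite binS bin1 exprS natrD -natr1 /y. ring.
apply: pdvD; first by apply: pdvMl => //; apply: pintD; [exact: pint1|
  apply: pintM => //; exact: pint_nat].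
by apply: pdvMl; [exact: pint_nat | apply: pdvP; apply: pintX].
Qed.

Lemma pdvX k x j : pdv k x -> pdv (k * j) (x ^+ j).
Proof.
move=> h; elim: j => [|j IH]; first by rewrite muln0 expr0; apply: pdv_pint; exact: pint1.
by rewrite exprS mulnS; apply: pdvMM.
Qed.

Lemma pint_pdv1 x : pdv 1 x -> pint x.
Proof. by move=> h; apply: pint_pdv; apply: (pdv_le (leq0n 1)). Qed.

Lemma prod1p (I : Type) (r : seq I) (P : pred I) (F : I -> rat) :
  (forall i, P i -> pdv 1 (F i)) ->
  pdv 2 (\prod_(i <- r | P i) (1 + F i) - 1 - \sum_(i <- r | P i) F i).
Proof.
move=> hF; elim: r => [|a r IH]; first by rewrite !big_nil !subrr; exact: pdv0.
rewrite !big_cons; case: ifP => Pa //.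
set A := \prod_(i <- r | P i) (1 + F i); set B := \sum_(i <- r | P i) F i.
have -> : (1 + F a) * A - 1 - (F a + B) = (1 + F a) * (A - 1 - B) + F a * B by ring.
apply: pdvD; first by apply: pdvMl => //; apply: pintD; [exact: pint1| apply: pint_pdv1; exact: hF].
apply: (pdvMM (k := 1) (l := 1)); first exact: hF.
by apply: pdv_sum.
Qed.

Lemma prod1p1 (I : Type) (r : seq I) (P : pred I) (F : I -> rat) :
  (forall i, P i -> pdv 1 (F i)) -> pdv 1 (\prod_(i <- r | P i) (1 + F i) - 1).
Proof.
move=> hF; have h := prod1p r hF.
have -> : \prod_(i <- r | P i) (1 + F i) - 1 = (\prod_(i <- r | P i) (1 + F i) - 1 - \sum_(i <- r | P i) F i) + \sum_(i <- r | P i) F i by ring.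
by apply: pdvD; [apply: (pdv_le (k := 1) (l := 2)) | apply: pdv_sum].
Qed.

Variable n : nat.
Hypothesis n0 : (0 < n)%N.
Hypothesis np : (n < p)%N.

Definition rho (j : nat) : rat := (n * j.+1)%:R / (n * j.+1 + p)%:R.
Definition E (m : nat) : rat := \prod_(j < m) rho j ^+ n.

Lemma cop_nj j : (j.+1 < p)%N -> coprime (n * j.+1) p.
Proof. by move=> jp; rewrite coprimeMl !coprime_small. Qed.

Lemma rho_pint j : (j.+1 < p)%N -> pint (rho j).
Proof.
move=> jp; apply: pint_divn; first by rewrite addn_gt0 (prime_gt0 pP) orbT.
by rewrite coprime_addp cop_nj.
Qed.

Lemma rho1 j : (j.+1 < p)%N -> pdv 1 (rho j - 1).
Proof.
move=> jp; have b0 : (0 < n * j.+1 + p)%N by rewrite addn_gt0 (prime_gt0 pP) orbT.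
have -> : rho j - 1 = p%:R ^+ 1 * (- 1 / (n * j.+1 + p)%:R).
  rewrite /rho natrD; field; rewrite (addrC 1) natr1 -natrM -natrD; exact: pnat_neq0.
apply: pdvP; apply: pintM; first by apply: pintN; exact: pint1.
by apply: pint_invn => //; rewrite coprime_addp cop_nj.
Qed.

Lemma E_pint m : (m < p)%N -> pint (E m).
Proof.
move=> mp; apply: pint_prod => j _; apply: pintX; apply: rho_pint.
by apply: leq_ltn_trans mp.
Qed.

Lemma E1 m : (m < p)%N -> pdv 1 (E m - 1).
Proof.
move=> mp; rewrite /E.
have -> : \prod_(j < m) rho j ^+ n = \prod_(j < m) (1 + (rho j ^+ n - 1)).
  by apply: eq_bigr => j _; rewrite addrC subrK.
apply: prod1p1 => j _.
have hj : (j.+1 < p)%N by apply: leq_ltn_trans mp.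
have -> : rho j ^+ n - 1 = (rho j - 1) * \sum_(i < n) rho j ^+ i.
  by rewrite -subrX1.
by apply: pdvMr; [apply: rho1 | apply: pint_sum => i _; apply: pintX; apply: rho_pint].
Qed.

Lemma E_rec m : (m.+1 < p)%N ->
  E m = E m.+1 * (1 + p%:R * (n * m.+1)%:R^-1) ^+ n.
Proof.
move=> mp; rewrite /E big_ord_recr /= -mulrA -exprMn.
have -> : rho m * (1 + p%:R * (n * m.+1)%:R^-1) = 1.
  have h1 : ((n * m.+1)%:R : rat) != 0 by apply: pnat_neq0; rewrite muln_gt0 n0.
  have h2 : ((n * m.+1 + p)%:R : rat) != 0 by apply: pnat_neq0; rewrite addn_gt0 (prime_gt0 pP) orbT.
  rewrite /rho natrD; field.
  by rewrite (addrC 1) natr1 -natrM -natrD !pnatr_eq0 -!lt0n n0 addn_gt0 (prime_gt0 pP) orbT.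
by rewrite expr1n mulr1.
Qed.

Definition kappa : rat := ('C(n, 2))%:R / (n%:R ^+ 2).

Lemma Ediff m z : (m.+1 < p)%N -> pint z ->
  pdv 3 (m.+1%:R * z * (E m - E m.+1) - p%:R * z * E m.+1
         - p%:R ^+ 2 * kappa * z * E m.+1 / m.+1%:R).
Proof.
move=> mp hz; rewrite E_rec //.
set u := (n * m.+1)%:R^-1.
have hu : pint u by apply: pint_invn; [rewrite muln_gt0 n0 | apply: cop_nj].
have := expand2 n hu.
set R := _ - _ - _ - _ => hR.
have h1 : (m.+1%:R : rat) != 0 by apply: pnat_neq0.
have h2 : (n%:R : rat) != 0 by apply: pnat_neq0.
have -> : m.+1%:R * z * (E m.+1 * (1 + p%:R * u) ^+ n - E m.+1) - p%:R * z * E m.+1 -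
    p%:R ^+ 2 * kappa * z * E m.+1 / m.+1%:R = (m.+1%:R * z * E m.+1) * R.
  rewrite /R /kappa /u natrM.
  field. by rewrite (addrC 1) natr1 h1 h2.
apply: pdvMl hR; apply: pintM; first by apply: pintM => //; exact: pint_nat.
by apply: E_pint.
Qed.


Lemma sbp (Fv fv Ev : nat -> rat) K : (forall m, fv m = Fv m.+1 - Fv m) -> Fv 0%N = 0 ->
  \sum_(m < K.+1) fv m * Ev m = Fv K.+1 * Ev K + \sum_(m < K) Fv m.+1 * (Ev m - Ev m.+1).
Proof.
move=> hf h0; elim: K => [|K IH].
  by rewrite big_ord1 big_ord0 hf h0 subr0 addr0.
rewrite big_ord_recr /= IH [in RHS]big_ord_recr /= hf; ring.
Qed.

Lemma ev_at0 N c : (forall i, (N <= i)%N -> c i = 0) -> ev N c 0 = c 0%N.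
Proof.
move=> hc; case: N hc => [|N] hc; first by rewrite /ev big_ord0 hc.
by rewrite ev_shift mul0r addr0.
Qed.

Lemma ev_taylor3 M c x : ev M.+3 c x =
  c 0%N + c 1%N * x + c 2%N * x ^+ 2 + x ^+ 3 * ev M (fun i => c i.+3) x.
Proof. rewrite !ev_shift; ring. Qed.

Lemma sum_rev K (F : nat -> rat) : \sum_(i < K) F i = \sum_(i < K) F (K - i.+1)%N.
Proof. by rewrite (reindex_inj rev_ord_inj). Qed.

Lemma sum_recl K (F : nat -> rat) : \sum_(m < K.+1) F m = F 0%N + \sum_(m < K) F m.+1.
Proof. by rewrite big_ord_recl. Qed.

Lemma harm : (2 < p)%N -> pdv 1 (\sum_(m < p.-1) (m.+1%:R)^-1).
Proof.
move=> p2; set K := p.-1.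
have pK : p = K.+1 by rewrite prednK // prime_gt0.
set H := \sum_(m < K) _.
have h2 : H + H = \sum_(m < K) ((m.+1%:R)^-1 + ((K - m.+1).+1%:R)^-1).
  rewrite big_split /=; congr (_ + _).
  by rewrite /H (sum_rev K (fun m => (m.+1%:R)^-1)).
have hH : pdv 1 (H + H).
  rewrite h2; apply: pdv_sum => m _.
  have mK := ltn_ord m.
  have ab : (m.+1 + (K - m.+1).+1)%N = p by rewrite pK addnS subnKC.
  have a0 : (0 < m.+1)%N by [].
  have b0 : (0 < (K - m.+1).+1)%N by [].
  have ap : (m.+1 < p)%N by rewrite pK ltnS.
  have bp : ((K - m.+1).+1 < p)%N by rewrite pK; lia.
  have -> : (m.+1%:R)^-1 + ((K - m.+1).+1%:R)^-1 =
      (p%:R ^+ 1) * ((m.+1 * (K - m.+1).+1)%:R)^-1 :> rat.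
    rewrite -ab natrD natrM expr1.
    by field; rewrite !n1_neq0.
  apply: pdvP; apply: pint_invn; first by rewrite muln_gt0.
  by rewrite coprimeMl !coprime_small.
have -> : H = (H + H) * 2%:R^-1.
  have h20 : (2%:R : rat) != 0 by [].
  by field.
apply: pdvMr => //; apply: pint_invn => //; exact: coprime_small.
Qed.


Lemma tele N C c : (forall x, ev N.+1 C (x + 1) - ev N.+1 C x = ev N c x) ->
  forall K, \sum_(m < K) ev N c m%:R = ev N.+1 C K%:R - ev N.+1 C 0.
Proof.
move=> dC; elim=> [|K IH]; first by rewrite big_ord0 subrr.
by rewrite big_ord_recr /= IH -dC natr1; ring.
Qed.

Lemma ev_pdv1 M C x : (forall i, pint (C i)) -> C 0%N = 0 -> pdv 1 x -> pdv 1 (ev M C x).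
Proof.
move=> hC C0 hx; case: M => [|M]; first by rewrite /ev big_ord0; exact: pdv0.
rewrite ev_shift C0 add0r; apply: pdvMr => //; apply: pint_ev => //; exact: pint_pdv1.
Qed.

Lemma ev_taylor M C : (forall i, pint (C i)) -> (forall i, (M <= i)%N -> C i = 0) ->
  pdv 3 (ev M C p%:R - C 0%N - p%:R * C 1%N - p%:R ^+ 2 * C 2%N).
Proof.
move=> hC sC; rewrite -(ev_widen p%:R sC (leq_addr 3 M)) addn3 ev_taylor3.
have -> : C 0%N + C 1%N * p%:R + C 2%N * p%:R ^+ 2 + p%:R ^+ 3 * ev M (fun i => C i.+3) p%:R -
   C 0%N - p%:R * C 1%N - p%:R ^+ 2 * C 2%N = p%:R ^+ 3 * ev M (fun i => C i.+3) p%:R by ring.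
apply: pdvP; apply: pint_ev => //; exact: pint_nat.
Qed.

Lemma polysum N c : (N < p)%N -> good N c -> pdv 1 (\sum_(m < p) ev N c m%:R).
Proof.
move=> Np gc; have [C [C0 [[hC sC] dC]]] := antidiff Np gc.
rewrite (tele dC) ev_at0 // C0 subr0; apply: ev_pdv1 => //; exact: pdv_p.
Qed.

Lemma alg_rho (A P : rat) : A != 0 -> A + P != 0 -> A / (A + P) - 1 + P / A = P ^+ 2 / (A * (A + P)).
Proof. by move=> h1 h2; field; rewrite h1 h2. Qed.

Lemma rho_exp j : (j.+1 < p)%N -> pdv 2 (rho j - 1 + p%:R / n%:R * (j.+1%:R)^-1).
Proof.
move=> jp; have A0 : (0 < n * j.+1)%N by rewrite muln_gt0 n0.
have B0 : (0 < n * j.+1 + p)%N by rewrite addn_gt0 (prime_gt0 pP) orbT.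
have -> : p%:R / n%:R * (j.+1%:R)^-1 = p%:R / (n * j.+1)%:R :> rat.
  by rewrite natrM invfM mulrA.
rewrite /rho natrD alg_rho; first last.
- by rewrite -natrD; exact: pnat_neq0.
- exact: pnat_neq0.
rewrite -natrD -natrM; apply: pdvP; apply: pint_invn; first by rewrite muln_gt0 A0.
by rewrite coprimeMl coprime_addp cop_nj.
Qed.

Lemma E_top : (2 < p)%N -> pdv 2 (E p.-1 - 1).
Proof.
move=> p2; set K := p.-1; have pK : p = K.+1 by rewrite prednK // prime_gt0.
have hPi : pdv 2 (\prod_(j < K) rho j - 1).
  have -> : \prod_(j < K) rho j = \prod_(j < K) (1 + (rho j - 1)).
    by apply: eq_bigr => j _; rewrite addrC subrK.
  have hj : forall j : 'I_K, (j.+1 < p)%N by move=> j; rewrite pK ltnS.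
  have h1 := prod1p (index_enum 'I_K) (P := xpredT) (F := fun j : 'I_K => rho j - 1)
     (fun j _ => rho1 (hj j)).
  set Pr := \prod_(j < K) (1 + (rho j - 1)) in h1 *.
  set Sm := \sum_(j < K) (rho j - 1) in h1.
  have hS : pdv 2 Sm.
    have -> : Sm = \sum_(j < K) (rho j - 1 + p%:R / n%:R * (j.+1%:R)^-1)
                  - p%:R / n%:R * \sum_(j < K) (j.+1%:R)^-1.
      by rewrite /Sm mulr_sumr -sumrB; apply: eq_bigr => j _; rewrite addrK.
    apply: pdvB; first by apply: pdv_sum => j _; apply: rho_exp.
    rewrite mulrAC; apply: pdvMr; last by apply: pint_invn => //; exact: coprime_small.
    rewrite -[2%N]/(1 + 1)%N; apply: pdvMM; first exact: pdv_p.
    exact: harm.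
  have -> : Pr - 1 = (Pr - 1 - Sm) + Sm by ring.
  by apply: pdvD.
rewrite /E.
have -> : \prod_(j < K) rho j ^+ n = (\prod_(j < K) rho j) ^+ n by rewrite prodrXl.
rewrite subrX1; apply: pdvMr => //; apply: pint_sum => i _; apply: pintX.
by apply: pint_prod => j _; apply: rho_pint; rewrite pK ltnS.
Qed.


Lemma kappa_pint : pint kappa.
Proof.
rewrite /kappa; apply: pintM; first exact: pint_nat.
rewrite -natrX; apply: pint_invn; first by rewrite expn_gt0 n0.
by rewrite coprimeXl // coprime_small.
Qed.

Lemma Ediff2 m z : (m.+1 < p)%N -> pint z ->
  pdv 2 (m.+1%:R * z * (E m - E m.+1) - p%:R * z * E m.+1).
Proof.
move=> mp hz; have h := Ediff mp hz.
have -> : m.+1%:R * z * (E m - E m.+1) - p%:R * z * E m.+1 =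
   (m.+1%:R * z * (E m - E m.+1) - p%:R * z * E m.+1
         - p%:R ^+ 2 * kappa * z * E m.+1 / m.+1%:R) + p%:R ^+ 2 * (kappa * z * E m.+1 / m.+1%:R).
  ring.
apply: pdvD; first exact: (pdv_le (k := 2) (l := 3)).
apply: pdvP; apply: pintM; last by apply: pint_invn => //; apply: coprime_small.
apply: pintM; [apply: pintM => //; exact: kappa_pint | exact: E_pint].
Qed.

Lemma shift_good N C : good N.+1 C -> good N (fun i => C i.+1).
Proof. by move=> [hC sC]; split=> // i hi; apply: sC. Qed.

Lemma ev_shift0 N C x : C 0%N = 0 -> ev N.+1 C x = x * ev N (fun i => C i.+1) x.
Proof. by move=> C0; rewrite ev_shift C0 add0r. Qed.

Lemma sumVE N c : (N < p)%N -> good N c -> (2 < p)%N ->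
  pdv 2 (\sum_(m < p) ev N c m%:R * E m).
Proof.
move=> Np gc p2; have [D [D0 [gD dD]]] := antidiff Np gc.
have [hD sD] := gD.
set K := p.-1; have pK : p = K.+1 by rewrite prednK // prime_gt0.
set Fd := fun x => ev N.+1 D x.
set Vd := fun x => ev N (fun i => D i.+1) x.
have FV : forall x, Fd x = x * Vd x by move=> x; rewrite /Fd ev_shift0.
have := @sbp (fun m => Fd m%:R) (fun m => ev N c m%:R) E K.
rewrite -pK => ->; last by rewrite /Fd ev_at0.
  2: by move=> m; rewrite /Fd -natr1 dD.
have hVd : forall x, pint x -> pint (Vd x) by move=> x hx; apply: pint_ev.
have hsum : pdv 1 (\sum_(m < p) Vd m%:R) by apply: polysum => //; exact: shift_good.
have e1 : \sum_(m < p) Vd m%:R = D 1%N + \sum_(m < K) Vd m.+1%:R.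
  by rewrite pK big_ord_recl /= /Vd ev_at0 //; move=> i hi; apply: sD.
have -> : Fd p%:R * E K + \sum_(m < K) Fd m.+1%:R * (E m - E m.+1) =
   (Fd p%:R * (E K - 1)) + (Fd p%:R - D 0%N - p%:R * D 1%N - p%:R ^+ 2 * D 2%N)
   + p%:R ^+ 2 * D 2%N
   + \sum_(m < K) (m.+1%:R * Vd m.+1%:R * (E m - E m.+1) - p%:R * Vd m.+1%:R * E m.+1)
   + p%:R * \sum_(m < K) (Vd m.+1%:R * (E m.+1 - 1))
   + p%:R * \sum_(m < p) Vd m%:R.
  have hs : \sum_(m < K) Fd m.+1%:R * (E m - E m.+1) =
     \sum_(m < K) (m.+1%:R * Vd m.+1%:R * (E m - E m.+1) - p%:R * Vd m.+1%:R * E m.+1)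
     + p%:R * \sum_(m < K) (Vd m.+1%:R * (E m.+1 - 1))
     + p%:R * \sum_(m < K) Vd m.+1%:R.
    rewrite !mulr_sumr -!big_split /=; apply: eq_bigr => m _; rewrite FV; ring.
  rewrite hs e1 D0; ring.
have hFd : pdv 1 (Fd p%:R) by apply: ev_pdv1 => //; exact: pdv_p.
apply: pdvD; last by apply: (pdvMM (k := 1) (l := 1)); [exact: pdv_p | exact: hsum].
apply: pdvD; last first.
  apply: (pdvMM (k := 1) (l := 1)); first exact: pdv_p.
  apply: pdv_sum => m _; apply: pdvMl; first by apply: hVd; exact: pint_nat.
  by apply: E1; rewrite pK ltnS.
apply: pdvD; last by apply: pdv_sum => m _; apply: Ediff2; [rewrite pK ltnS | apply: hVd; exact: pint_nat].
apply: pdvD; last by apply: pdvMr; [exact: pdv_pX | exact: hD].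
apply: pdvD; last by apply: (pdv_le (k := 2) (l := 3)) => //; apply: ev_taylor.
by apply: (pdvMM (k := 1) (l := 1)) => //; apply: E1; rewrite pK.
Qed.


Lemma main_sum N c C : (N < p)%N -> good N c -> C 0%N = 0 -> good N.+1 C ->
  (forall x, ev N.+1 C (x + 1) - ev N.+1 C x = ev N c x) -> pdv 1 (C 2%N) ->
  (2 < p)%N -> pdv 3 (\sum_(m < p) ev N c m%:R * E m).
Proof.
move=> Np gc C0 gC dC hC2 p2; have [hC sC] := gC.
set K := p.-1; have pK : p = K.+1 by rewrite prednK // prime_gt0.
set Fn := fun x => ev N.+1 C x.
set V := fun x => ev N (fun i => C i.+1) x.
set W := fun x => ev N (fun i => C i.+2) x.
have FV : forall x, Fn x = x * V x by move=> x; rewrite /Fn ev_shift0.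
have gV : good N (fun i => C i.+1) by exact: shift_good.
have gW : good N (fun i => C i.+2).
  by split=> [i|i hi]; [exact: hC | apply: sC; rewrite ltnS ltnW].
have VW : forall x, V x = C 1%N + x * W x.
  move=> x; rewrite /V -(ev_widen x gV.2 (leqnSn N)) ev_shift //.
have hV : forall x, pint x -> pint (V x) by move=> x hx; apply: pint_ev.
have := @sbp (fun m => Fn m%:R) (fun m => ev N c m%:R) E K.
rewrite -pK => ->; last by rewrite /Fn ev_at0.
  2: by move=> m; rewrite /Fn -natr1 dC.
have hs : \sum_(m < K) Fn m.+1%:R * (E m - E m.+1) =
   \sum_(m < K) (m.+1%:R * V m.+1%:R * (E m - E m.+1) - p%:R * V m.+1%:R * E m.+1
         - p%:R ^+ 2 * kappa * V m.+1%:R * E m.+1 / m.+1%:R)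
   + p%:R * \sum_(m < K) (V m.+1%:R * E m.+1)
   + p%:R ^+ 2 * kappa * \sum_(m < K) (V m.+1%:R * E m.+1 / m.+1%:R).
  rewrite !mulr_sumr -!big_split /=; apply: eq_bigr => m _; rewrite FV; ring.
have hA : pdv 2 (\sum_(m < K) V m.+1%:R * E m.+1 + C 1%N).
  have := sumVE Np gV p2.
  have E0 : E 0 = 1 by rewrite /E big_ord0.
  have V0 : V 0 = C 1%N by rewrite /V (ev_at0 gV.2).
  by rewrite pK (sum_recl K (fun m => V m%:R * E m)) /= E0 V0 mulr1 addrC.
have hB : pdv 1 (\sum_(m < K) V m.+1%:R * E m.+1 / m.+1%:R).
  have -> : \sum_(m < K) V m.+1%:R * E m.+1 / m.+1%:R =
     \sum_(m < K) (V m.+1%:R / m.+1%:R * (E m.+1 - 1))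
     + C 1%N * \sum_(m < K) (m.+1%:R)^-1 + \sum_(m < K) W m.+1%:R.
    rewrite mulr_sumr -!big_split /=; apply: eq_bigr => m _; rewrite VW.
    by field; rewrite n1_neq0.
  apply: pdvD; first apply: pdvD.
  - apply: pdv_sum => m _; apply: pdvMl.
      apply: pintM; [apply: hV; exact: pint_nat | apply: pint_invn => //].
      by apply: coprime_small => //; rewrite pK ltnS.
    by apply: E1; rewrite pK ltnS.
  - by apply: pdvMl => //; exact: harm.
  have W0 : W 0 = C 2%N by rewrite /W (ev_at0 gW.2).
  have := polysum Np gW; rewrite pK (sum_recl K (fun m => W m%:R)) /= W0 => h.
  have -> : \sum_(m < K) W m.+1%:R = (C 2%N + \sum_(m < K) W m.+1%:R) - C 2%N by ring.
  by apply: pdvB.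
have hFn : pdv 1 (Fn p%:R) by apply: ev_pdv1 => //; exact: pdv_p.
have -> : Fn p%:R * E K + \sum_(m < K) Fn m.+1%:R * (E m - E m.+1) =
   Fn p%:R * (E K - 1) + (Fn p%:R - C 0%N - p%:R * C 1%N - p%:R ^+ 2 * C 2%N)
   + p%:R ^+ 2 * C 2%N
   + \sum_(m < K) (m.+1%:R * V m.+1%:R * (E m - E m.+1) - p%:R * V m.+1%:R * E m.+1
         - p%:R ^+ 2 * kappa * V m.+1%:R * E m.+1 / m.+1%:R)
   + p%:R * (\sum_(m < K) V m.+1%:R * E m.+1 + C 1%N)
   + p%:R ^+ 2 * kappa * \sum_(m < K) (V m.+1%:R * E m.+1 / m.+1%:R).
  rewrite hs C0; ring.
apply: pdvD; last first.
  rewrite -mulrA; apply: (pdvMM (k := 2) (l := 1)); first exact: pdv_pX.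
  by apply: pdvMl => //; exact: kappa_pint.
apply: pdvD; last by apply: (pdvMM (k := 1) (l := 2)); [exact: pdv_p | exact: hA].
apply: pdvD; last first.
  apply: pdv_sum => m _; apply: Ediff; first by rewrite pK ltnS.
  apply: hV; exact: pint_nat.
apply: pdvD; last by apply: (pdvMM (k := 2) (l := 1)); [exact: pdv_pX | exact: hC2].
apply: pdvD; last by apply: ev_taylor.
by apply: (pdvMM (k := 1) (l := 2)) => //; rewrite /K; apply: E_top.
Qed.


Lemma sym_C2 N c C q : (N < p)%N -> good N c -> C 0%N = 0 -> good N.+1 C ->
  (forall x, ev N.+1 C (x + 1) - ev N.+1 C x = ev N c x) ->
  (0 < q)%N -> (q <= p)%N -> (2 < p)%N ->
  (forall i, (0 < i < q)%N -> ev N c (- i%:R) = 0) ->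
  (forall x, ev N c (- q%:R - x) = ev N c x) ->
  (forall m, (p + 1 - q <= m < p)%N -> pdv 3 (ev N c m%:R)) ->
  pdv 1 (C 2%N).
Proof.
move=> Np gc C0 gC dC q0 qp p2 hz hs hv; have [hC sC] := gC.
set F := fun x => ev N.+1 C x.
set f := fun x => ev N c x.
have dF : forall x, F (x + 1) = F x + f x by move=> x; rewrite /F /f -(dC x); ring.
have F0 : F 0 = 0 by rewrite /F ev_at0.
have ha : forall j, (j < q)%N -> F (- j%:R) = 0.
  elim=> [|j IH] hj; first by rewrite oppr0.
  have e : - j.+1%:R + 1 = - j%:R :> rat by rewrite -natr1; ring.
  have := dF (- j.+1%:R); rewrite e IH ?(ltnW hj) // /f hz; last by rewrite hj.
  by rewrite addr0 => ->.
have hb : forall m, F m%:R + F (1 - q%:R - m%:R) = 0.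
  elim=> [|m IH].
    rewrite F0 add0r subr0.
    have -> : 1 - q%:R = - (q.-1)%:R :> rat.
      by rewrite -{1}(prednK q0) -natr1; ring.
    by apply: ha; rewrite prednK.
  have e1 : F (1 - q%:R - m%:R) = F (1 - q%:R - m.+1%:R) + f (- q%:R - m%:R).
    have := dF (- q%:R - m%:R); rewrite /f -hs.
    have -> : - q%:R - m%:R + 1 = 1 - q%:R - m%:R :> rat by ring.
    have -> : - q%:R - (- q%:R - m%:R) = m%:R :> rat by ring.
    have -> : - q%:R - m%:R = 1 - q%:R - m.+1%:R :> rat by rewrite -natr1; ring.
    by [].
  move: IH; rewrite e1 -natr1 dF /f hs => IH.
  by rewrite -IH; ring.
have hc : F (p + 1 - q)%:R + F (- p%:R) = 0.
  have := hb (p + 1 - q)%N.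
  have -> : 1 - q%:R - (p + 1 - q)%:R = - p%:R :> rat.
    rewrite natrB; last by lia.
    by rewrite natrD; ring.
  by [].
have hd : forall j, F (p + 1 - q + j)%:R - F (p + 1 - q)%:R =
           \sum_(i < j) f (p + 1 - q + i)%:R.
  elim=> [|j IH]; first by rewrite addn0 subrr big_ord0.
  by rewrite big_ord_recr /= -IH addnS -natr1 dF; ring.
have hpq : (p + 1 - q + q.-1 = p)%N.
  by lia.
have hFp : pdv 3 (F p%:R + F (- p%:R)).
  have -> : F p%:R + F (- p%:R) = F p%:R - F (p + 1 - q)%:R.
    have hc' : F (- p%:R) = - F (p + 1 - q)%:R.
      by apply/eqP; rewrite -addr_eq0 addrC hc.
    by rewrite hc'.
  rewrite -{1}hpq hd; apply: pdv_sum => i _; apply: hv.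
  rewrite leq_addr /=; have := ltn_ord i; lia.
have sC' : forall i, (N.+1 <= i)%N -> C i = 0 by [].
have hT : forall x, F x = C 1%N * x + C 2%N * x ^+ 2 + x ^+ 3 * ev N.+1 (fun i => C i.+3) x.
  move=> x; rewrite /F -(ev_widen x sC' (leq_addr 3 N.+1)) addn3 ev_taylor3 C0; ring.
set G := fun x => ev N.+1 (fun i => C i.+3) x.
have hG : pdv 1 (G p%:R - G (- p%:R)).
  rewrite /G !ev_shift.
  have -> : forall a b c : rat, a + p%:R * b - (a + - p%:R * c) = p%:R ^+ 1 * (b + c).
    by move=> a b c'; ring.
  apply: pdvP; apply: pintD; apply: pint_ev => //; [exact: pint_nat | apply: pintN; exact: pint_nat].
have h2 : pdv 3 (p%:R ^+ 2 * (2%:R * C 2%N)).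
  have -> : p%:R ^+ 2 * (2%:R * C 2%N) = (F p%:R + F (- p%:R)) - p%:R ^+ 3 * (G p%:R - G (- p%:R)).
    rewrite !hT /G; ring.
  apply: pdvB => //; apply: (pdv_le (k := 3) (l := 3 + 1)) => //.
  by apply: pdvMM => //; exact: pdv_pX.
move: h2 => [y [hy ey]].
have -> : C 2%N = p%:R ^+ 1 * (y / 2%:R).
  have hp := pp0.
  have h20 : (2%:R : rat) != 0 by [].
  apply: (mulfI (x := p%:R ^+ 2 * 2%:R)); first by rewrite mulf_neq0 // expf_neq0.
  by rewrite mulrA -[in LHS]mulrA ey; field.
apply: pdvP; apply: pintM => //; apply: pint_invn => //; exact: coprime_small.
Qed.

End Padic.

Lemma size_Q (n k : nat) :
  (size (\prod_(i < k) ('X + (i.+1%:R : int)%:P) ^+ n)%R <= k * n + 1)%N.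
Proof.
elim: k => [|k IH]; first by rewrite big_ord0 size_poly1.
rewrite big_ord_recr /=; apply: leq_trans (size_polyMleq _ _) _.
have := size_poly_exp_leq ('X + (k.+1%:R : int)%:P) n.
rewrite size_XaddC /= mul1n => h.
apply: (@leq_trans (k * n + 1 + n.+1).-1); last by rewrite mulSn; lia.
by rewrite -!subn1 leq_sub2r // leq_add.
Qed.

Lemma poly_Q (n k : nat) : exists N (c : nat -> int), (N <= k * n + 1)%N /\
  (forall i, (N <= i)%N -> c i = 0) /\
  forall x : rat, ev N (fun i => (c i)%:~R) x = \prod_(i < k) (x + i.+1%:R) ^+ n.
Proof.
pose Q : {poly int} := \prod_(i < k) ('X + (i.+1%:R)%:P) ^+ n.
exists (size Q), (fun i => Q`_i); split; first exact: size_Q.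
split; first by move=> i hi; rewrite nth_default.
move=> x; rewrite /ev.
have -> : \sum_(i < size Q) (Q`_i)%:~R * x ^+ i = (map_poly intr Q).[x].
  rewrite horner_coef size_map_inj_poly //; last exact: intr_inj.
  by apply: eq_bigr => i _; rewrite coef_map.
rewrite /Q rmorph_prod horner_prod; apply: eq_bigr => i _.
by rewrite rmorphXn rmorphD /= map_polyX map_polyC /= !hornerE rmorph_nat.
Qed.

Lemma pdv_cong p X : pdv p 3 X -> rat_cong_mod p 3 X 0.
Proof.
move=> [y [[a [b [b0 [cb ->]]]] ->]]; exists a, b; split => //; split => //.
by rewrite subr0 natrX mulrA.
Qed.

Lemma poch_add x a b : poch x (a + b) = poch x a * poch (x + a%:R) b.
Proof.
rewrite /poch big_split_ord /=; congr (_ * _); apply: eq_bigr => i _.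
by rewrite natrD addrA.
Qed.

Lemma sum_split a b (F : nat -> rat) :
  \sum_(k < a + b) F k = \sum_(k < a) F k + \sum_(k < b) F (a + k)%N.
Proof. by rewrite big_split_ord. Qed.

Lemma poch1_pint p k : pint p (poch 1 k).
Proof. by apply: pint_prod => i _; apply: pintD; [exact: pint1 | exact: pint_nat]. Qed.

Lemma term_small p n x k : pint p ((poch x k)^-1) ->
  pdv p n ((p ^ n)%N%:R * ((poch 1 k) ^+ n / (poch x k) ^+ n)).
Proof.
move=> h; rewrite natrX -exprVn -exprMn.
by apply: pdvP; apply: pintX; apply: pintM => //; exact: poch1_pint.
Qed.

Theorem theorem1p2 (n q p : nat) :
  (2 < n)%N -> (0 < q)%N -> (~~ odd n || odd q) ->
  prime p -> (maxn n ((q - 1) * n + 1) < p)%N ->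
  rat_cong_mod p 3
    ((p ^ n)%N%:R *
       \sum_(k < p) (poch 1 k) ^+ n /
                    (poch (p%:R / n%:R - q%:R + 2) k) ^+ n)
    0.
Proof.
move=> n2 q0 par pP; rewrite gtn_max => /andP [np hqp].
have n0 : (0 < n)%N by apply: leq_trans n2.
have n3 : (3 <= n)%N by [].
have p2 : (2 < p)%N by apply: ltn_trans np.
have hp0 : (p%:R : rat) != 0 by rewrite pnatr_eq0 -lt0n prime_gt0.
have hn0 : (n%:R : rat) != 0 by rewrite pnatr_eq0 -lt0n.
apply: pdv_cong; rewrite mulr_sumr.
case: q q0 par hqp => [//|[|r]] _ par hqp.
-
  apply: pdv_sum => k _; apply: (pdv_le n3); apply: term_small.
  rewrite -prodfV; apply: pint_prod => i _.
  have ik : (i.+1 < p)%N by have := ltn_ord i; have := ltn_ord k; lia.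
  have e : p%:R / n%:R - 1%:R + 2 + i%:R = (n * i.+1 + p)%:R / n%:R :> rat.
    by rewrite natrD natrM; field.
  rewrite e invf_div; apply: pint_divn; first by rewrite addn_gt0 (prime_gt0 pP) orbT.
  by rewrite coprime_addp (cop_nj pP n0 np ik).
have hr : (r.+1 * n + 1 < p)%N by move: hqp; rewrite subn1.
have rn : (r.+1 <= r.+1 * n)%N by rewrite leq_pmulr.
have rp : (r.+1 <= p)%N by lia.
set a := p%:R / n%:R - r.+2%:R + 2.
have F1 : forall i, (i < r)%N -> a + i%:R = (p - n * (r - i))%:R / n%:R.
  move=> i ir; have h1 : (n * (r - i) <= p)%N.
    have : (n * (r - i) <= n * r.+1)%N by rewrite leq_mul2l; apply/orP; right; lia.
    lia.
  rewrite /a natrB // natrM natrB; last by apply: ltnW.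
  by field.
have F1b : forall i, (i < r)%N -> (0 < p - n * (r - i) < p)%N.
  move=> i ir; have h1 : (n * (r - i) <= n * r.+1)%N by rewrite leq_mul2l; apply/orP; right; lia.
  have h2 : (0 < n * (r - i))%N by rewrite muln_gt0 n0 subn_gt0.
  apply/andP; split; lia.
have parinv : forall k, (k <= r)%N -> pint p ((poch a k)^-1).
  move=> k kr; rewrite -prodfV; apply: pint_prod => i _.
  have ir : (i < r)%N by apply: leq_trans (ltn_ord i) kr.
  rewrite F1 // invf_div; have /andP [h1 h2] := F1b i ir.
  by apply: pint_divn => //; apply: coprime_small.
have F2 : a + r%:R = p%:R / n%:R by rewrite /a; ring.
have F3 : forall i, a + r.+1%:R + i%:R = (n * i.+1 + p)%:R / n%:R.
  by move=> i; rewrite /a natrD natrM; field.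
pose G := fun k : nat => (p ^ n)%N%:R * ((poch 1 k) ^+ n / (poch a k) ^+ n).
have -> : \sum_(k < p) (p ^ n)%N%:R * ((poch 1 k) ^+ n / (poch a k) ^+ n) =
   \sum_(k < r.+1 + (p - r.+1)) G k by rewrite subnKC.
rewrite sum_split; apply: pdvD.
  apply: pdv_sum => k _; apply: (pdv_le n3); apply: term_small.
  by apply: parinv; rewrite -ltnS.
have [N [c [hN [sc ec]]]] := poly_Q n r.+1.
set c' := fun i => (c i)%:~R : rat.
have NP : (N < p)%N by lia.
have hgood : good p N c' by split=> [i|i hi]; [exact: pint_int | rewrite /c' sc].
have -> : \sum_(m < p - r.+1) G (r.+1 + m)%N =
    (n%:R / poch a r) ^+ n * \sum_(m < p - r.+1) ev N c' m%:R * E p n m.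
  rewrite mulr_sumr; apply: eq_bigr => m _; rewrite /G ec /E.
  rewrite !prodrXl natrX -exprVn -!exprMn; congr (_ ^+ n).
  rewrite (poch_add a r.+1 m) (addnC r.+1 m) (poch_add 1 m r.+1).
  have -> : poch a r.+1 = poch a r * (p%:R / n%:R) by rewrite /poch big_ord_recr /= F2.
  have -> : poch (a + r.+1%:R) m = \prod_(i < m) ((n * i.+1 + p)%:R / n%:R).
    by apply: eq_bigr => i _; rewrite F3.
  have -> : poch (1 + m%:R) r.+1 = \prod_(i < r.+1) (m%:R + i.+1%:R).
    by apply: eq_bigr => i _; rewrite -natr1; ring.
  have -> : \prod_(j < m) rho p n j = poch 1 m / \prod_(i < m) ((n * i.+1 + p)%:R / n%:R).
    rewrite /poch -prodf_div; apply: eq_bigr => j _; rewrite /rho.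
    have h : ((n * j.+1 + p)%:R : rat) != 0.
      by rewrite pnatr_eq0 -lt0n addn_gt0 (prime_gt0 pP) orbT.
    move: h; rewrite natrD natrM => h.
    by field; rewrite hn0 (addrC 1) natr1.

  have hPar : poch a r != 0.
    apply/prodf_neq0 => i _; rewrite F1 //; have /andP [h1 h2] := F1b i (ltn_ord i).
    by rewrite mulf_neq0 ?invr_eq0 // pnatr_eq0 -lt0n.
  have hQ : \prod_(i < m) ((n * i.+1 + p)%:R / n%:R) != 0 :> rat.
    apply/prodf_neq0 => i _; rewrite mulf_neq0 ?invr_eq0 // pnatr_eq0 -lt0n.
    by rewrite addn_gt0 (prime_gt0 pP) orbT.
  move: hPar hQ; set Par := poch a r; set Q := \prod_(i < m) _; set P1 := poch 1 m.
  set Pm := \prod_(i < r.+1) _ => hPar hQ.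
  by field; rewrite ?hPar ?hQ ?hp0 ?hn0.
apply: pdvMl.
  apply: pintX; apply: pintM; [exact: pint_nat | exact: parinv].
have [C [C0 [gC dC]]] := antidiff pP NP hgood.
have q0' : (0 < r.+2)%N by [].
have qp : (r.+2 <= p)%N by lia.
have hz : forall i, (0 < i < r.+2)%N -> ev N c' (- i%:R) = 0.
  move=> i /andP [i0 ir]; rewrite ec.
  have ir' : (i.-1 < r.+1)%N by lia.
  rewrite (bigD1 (Ordinal ir')) //= prednK // addNr expr0n (gtn_eqF n0).
  by rewrite mul0r.
have hs : forall x, ev N c' (- r.+2%:R - x) = ev N c' x.
  move=> x; rewrite !ec (reindex_inj rev_ord_inj) /=.
  have e : forall i : 'I_r.+1, (- r.+2%:R - x + (r.+1 - i.+1).+1%:R) ^+ n =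
                                (-1) ^+ n * (x + i.+1%:R) ^+ n.
    move=> i; have hi := ltn_ord i.
    have e2 : (r.+1 - i.+1).+1%:R = r.+1%:R - i%:R :> rat.
      by rewrite -natr1 natrB //; ring.
    by rewrite e2 -exprNn; congr (_ ^+ n); ring.
  rewrite (eq_bigr _ (fun i _ => e i)) big_split /= prodr_const card_ord -exprM.
  rewrite -signr_odd oddM /=.
  by move: par; rewrite /=; case: (odd n); case: (odd r) => //= _; rewrite expr0 mul1r.
have hv : forall m, (p + 1 - r.+2 <= m < p)%N -> pdv p 3 (ev N c' m%:R).
  move=> m /andP [m1 m2]; rewrite ec.
  have jr : (p - m.+1 < r.+1)%N by lia.
  rewrite (bigD1 (Ordinal jr)) //= -natrD.
  have -> : (m + (p - m.+1).+1)%N = p by lia.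
  apply: (pdv_le n3); apply: pdvMr; first exact: pdv_pX.
  by apply: pint_prod => i _; apply: pintX; apply: pintD; exact: pint_nat.
have hC2 := sym_C2 pP n0 np NP hgood C0 gC dC q0' qp p2 hz hs hv.
have hmain := main_sum pP n0 np NP hgood C0 gC dC hC2 p2.
have -> : \sum_(m < p - r.+1) ev N c' m%:R * E p n m =
   \sum_(m < p) ev N c' m%:R * E p n m
   - \sum_(j < r.+1) ev N c' (p - r.+1 + j)%N%:R * E p n (p - r.+1 + j).
  have -> : \sum_(m < p) ev N c' m%:R * E p n m =
      \sum_(m < (p - r.+1) + r.+1) ev N c' m%:R * E p n m by rewrite subnK.
  rewrite (sum_split (p - r.+1) r.+1 (fun m => ev N c' m%:R * E p n m)) /=; ring.
apply: pdvB => //; apply: pdv_sum => j _; apply: pdvMr.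
  by apply: hv; have := ltn_ord j; lia.
by apply: (E_pint pP n0 np); have := ltn_ord j; lia.
Qed.
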